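(* Let $r,t,\ell,m$ be integers with $1 \le t \le \ell \le m$ and $1 \le r \le \ell$. Then $$\mathfrak{w}_r(t;\ell,m) = \frac{q-1}{q}\sum_{s=1}^r q^{\binom{s}{2}}\left(\frac{[m]_q!}{[m-t]_q!} - (-1)^s \frac{[m-s]_q!}{[m-t]_q!} \right)q^{s(\ell-r)}q^{\binom{t-s}{2}}{r\brack s}_q {\ell-r\brack t-s}_q$$ $$=\frac{q-1}{q}\left(\mu_t(\ell,m) -\sum_{s=0}^r (-1)^s q^{\binom{s}{2}} \frac{[m-s]_q!}{[m-t]_q!}\,q^{s(\ell-r)}\,q^{\binom{t-s}{2}}{r\brack s}_q {\ell-r\brack t-s}_q\right),$$ where terms with $s>t$ vanish because the Gaussian binomial ${\ell-r\brack t-s}_q$ is then $0$.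
   Context: $q$ is a prime power. $\mu_t(\ell,m)$ is the number of $\ell\times m$ matrices over $\mathbb{F}_q$ of rank exactly $t$. For an $\ell\times m$ matrix $M=(m_{ij})$, $\tau_r(M)=m_{11}+\cdots+m_{rr}$, and $\mathfrak w_r(t;\ell,m)$ is the number of $\ell\times m$ matrices $M$ over $\mathbb{F}_q$ with $\mathrm{rk}(M)=t$ and $\tau_r(M)\ne 0$. The Gaussian factorial is $[n]_q!=\prod_{i=1}^n(q^i-1)$ (with $[0]_q!=1$), and ${n\brack k}_q$ is the Gaussian binomial coefficient, equal to $0$ if $k<0$ or $k>n$. *)

(* Defs.v *)
From HB Require Import structures.
From mathcomp Require Import all_boot all_order all_algebra all_field.
Set Implicit Arguments. Unset Strict Implicit. Unset Printing Implicit Defensive.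
Import Order.TTheory GRing.Theory Num.Theory.
Local Open Scope ring_scope.

Definition gfact (q n : nat) : rat :=
  \prod_(1 <= i < n.+1) ((q%:R : rat) ^+ i - 1).

Definition gbinom (q n : nat) (k : int) : rat :=
  match k with
  | Posz k' => if (k' <= n)%N then gfact q n / (gfact q k' * gfact q (n - k')) else 0
  | Negz _ => 0
  end.

Definition tau (F : fieldType) (l m r : nat) (M : 'M[F]_(l, m)) : F :=
  \sum_(i < l) \sum_(j < m) (if ((i : nat) == (j : nat)) && (i < r)%N then M i j else 0).

Definition mu (F : finFieldType) (t l m : nat) : nat :=
  #|[set M : 'M[F]_(l, m) | \rank M == t]|.

Definition wcount (F : finFieldType) (r t l m : nat) : nat :=
  #|[set M : 'M[F]_(l, m) | (\rank M == t) && (tau r M != 0)]|.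

(* Main.v *)
Require Import Defs.
From HB Require Import structures.
From mathcomp Require Import all_boot all_order all_algebra all_field.
From mathcomp Require Import ring zify.
Import Order.TTheory GRing.Theory Num.Theory.
Local Open Scope ring_scope.

Lemma Qgt1 (q : nat) : (1 < q)%N -> 1 < (q%:R : rat).
Proof. by move=> h; rewrite ltr1n. Qed.

Lemma Qexp_neq1 (q i : nat) : (1 < q)%N -> i != 0%N -> (q%:R : rat) ^+ i - 1 != 0.
Proof.
move=> h hi; rewrite subr_eq0; apply/eqP => e.
by move: (exprn_egt1 i (Qgt1 _ h)); rewrite e ltxx hi.
Qed.

Lemma gfact0 q : gfact q 0 = 1.
Proof. by rewrite /gfact big_geq. Qed.

Lemma gfactS q n : gfact q n.+1 = gfact q n * ((q%:R : rat) ^+ n.+1 - 1).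
Proof. by rewrite /gfact big_nat_recr. Qed.

Lemma gfact_neq0 q n : (1 < q)%N -> gfact q n != 0.
Proof.
move=> h; elim: n => [|n IH]; first by rewrite gfact0 oner_eq0.
by rewrite gfactS mulf_neq0 // Qexp_neq1.
Qed.

Lemma gbinom_neg q n (k : int) : k < 0 -> gbinom q n k = 0.
Proof. by case: k. Qed.

Lemma gbinom_n0 q n : (1 < q)%N -> gbinom q n 0 = 1.
Proof.
move=> h; rewrite /gbinom /= subn0 gfact0 mul1r divff //; exact: gfact_neq0.
Qed.

Lemma gbinom_big q n k : (n < k)%N -> gbinom q n k = 0.
Proof. by move=> h; rewrite /gbinom leqNgt h. Qed.

Lemma gbinom_pascal q n k : (1 < q)%N ->
  gbinom q n.+1 k.+1 = gbinom q n k + (q%:R : rat) ^+ k.+1 * gbinom q n k.+1.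
Proof.
move=> h; have nz := fun n => gfact_neq0 q n h.
case: (ltngtP k n) => hk.
- rewrite /gbinom ltnS hk (ltnW hk) subSS.
  set Q := (q%:R : rat).
  have e1 : (n - k = (n - k.+1).+1)%N by lia.
  rewrite (gfactS q n) (gfactS q k) e1 (gfactS q (n - k.+1)) -e1.
  have eQ : Q ^+ n.+1 = Q ^+ k.+1 * Q ^+ (n - k).
    by rewrite -exprD; congr (_ ^+ _); lia.
  rewrite eQ.
  have h1 : Q ^+ k.+1 - 1 != 0 by apply: Qexp_neq1.
  have h2 : Q ^+ (n - k) - 1 != 0 by apply: Qexp_neq1; lia.
  move: h2; rewrite e1 => h2.
  have n1 := nz n; have n2 := nz k; have n3 := nz (n - k.+1)%N.
  rewrite -/Q in n1 n2 n3.
  field; rewrite ?n1 ?n2 ?n3 ?h1 ?h2 //.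
- rewrite !gbinom_big //; try lia. by rewrite mulr0 addr0.
- subst k. rewrite /gbinom ltnn leqnn subnn gfact0 !mulr1 mulr0 addr0 !divff //.
  by rewrite leqnn subnn gfact0 mulr1 divff.
Qed.

Definition sg (e : bool) (s : nat) : rat := if e then (-1) ^+ s else 1.
Definition fe (e : bool) (s : nat) : nat := if e then s else 0%N.
Definition term (q : nat) (e : bool) (r t L m s : nat) : rat :=
  sg e s * (q%:R : rat) ^+ 'C(s, 2) * (gfact q (m - fe e s) / gfact q (m - t)) *
  (q%:R : rat) ^+ (s * L) * (q%:R : rat) ^+ 'C(t - s, 2) *
  gbinom q r s%:Z * gbinom q L (t%:Z - s%:Z).
Definition Sfun (q : nat) (e : bool) (r t L m : nat) : rat :=
  \sum_(0 <= s < r.+1) term q e r t L m s.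

Lemma gbinom_negz q n (a b : nat) : (a < b)%N -> gbinom q n (a%:Z - b%:Z) = 0.
Proof. by move=> h; apply: gbinom_neg; rewrite subr_lt0 ltz_nat. Qed.

Lemma term_rec q e r t L m s : (1 < q)%N -> (t < m)%N ->
  term q e r t.+1 L.+1 m s =
  (q%:R : rat) ^+ t.+1 * term q e r t.+1 L m s +
  ((q%:R : rat) ^+ m - (q%:R : rat) ^+ t) * term q e r t L m s.
Proof.
move=> hq htm; rewrite /term.
set Q := (q%:R : rat).
case: (ltngtP s t.+1) => hs.
- have [u ht] : exists u, t = (s + u)%N by exists (t - s)%N; lia.
  subst t.
  have [d hm] : exists d, m = (s + u + d).+1 by exists (m - (s + u).+1)%N; lia.
  have e3 : ((s + u).+1 - s = u.+1)%N by lia.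
  have e4 : ((s + u) - s = u)%N by lia.
  have e1 : ((s + u).+1%:Z - s%:Z = u.+1%:Z) by rewrite subzn ?e3 //; lia.
  have e2 : ((s + u)%:Z - s%:Z = u%:Z) by rewrite subzn ?e4 //; lia.
  have e5 : (m - (s + u).+1 = d)%N by lia.
  have e6 : (m - (s + u) = d.+1)%N by lia.
  rewrite e1 e2 e3 e4 e5 e6 gbinom_pascal // (gfactS q d) binS bin1 mulnS.
  rewrite hm -addSn !exprD !exprS.
  have n1 := gfact_neq0 q d hq.
  have n2 : Q * Q ^+ d - 1 != 0 by rewrite -exprS; apply: Qexp_neq1.
  rewrite -/Q in n1 n2 *.
  rewrite !(exprD, exprS). clearbody Q. field; rewrite ?n1 ?n2 //.
- rewrite !gbinom_negz //; try lia. by rewrite !mulr0 addr0.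
- subst s. rewrite subrr (@gbinom_negz q L t t.+1 (ltnSn t) : gbinom q L (t%:Z - t.+1%:Z) = 0) subnn !gbinom_n0 // mulnS exprD.
  rewrite !mulr0 addr0 !mulr1; clearbody Q; ring.
Qed.

Lemma Srec q e r t L m : (1 < q)%N -> (t < m)%N ->
  Sfun q e r t.+1 L.+1 m =
  (q%:R : rat) ^+ t.+1 * Sfun q e r t.+1 L m +
  ((q%:R : rat) ^+ m - (q%:R : rat) ^+ t) * Sfun q e r t L m.
Proof.
move=> hq htm; rewrite /Sfun !mulr_sumr -big_split /=.
by apply: eq_bigr => s _; apply: term_rec.
Qed.

Lemma sum_nat_eq (n t : nat) (G : nat -> rat) :
  \sum_(0 <= s < n) (if s == t then G s else 0) = if (t < n)%N then G t else 0.
Proof.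
elim: n => [|n IH]; first by rewrite big_geq.
rewrite big_nat_recr //= IH.
case: (ltngtP t n) => h.
- by rewrite ltnS (ltnW h) addr0.
- have -> : (t < n.+1)%N = false by apply/negbTE; lia.
  by rewrite addr0.
- by subst t; rewrite ltnSn add0r.
Qed.

Lemma Sfun_L0 q e r t m : (1 < q)%N ->
  Sfun q e r t 0 m = sg e t * (q%:R : rat) ^+ 'C(t, 2) *
     (gfact q (m - fe e t) / gfact q (m - t)) * gbinom q r t.
Proof.
move=> hq; rewrite /Sfun.
rewrite (eq_bigr (fun s => if s == t then sg e t * (q%:R : rat) ^+ 'C(t, 2) *
     (gfact q (m - fe e t) / gfact q (m - t)) * gbinom q r t else 0)).
  rewrite sum_nat_eq ltnS; case: leqP => // h.
  by rewrite gbinom_big // mulr0.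
move=> s _; rewrite /term; case: (ltngtP s t) => h.
- rewrite subzn ?(ltnW h) //.
  by rewrite (@gbinom_big q 0 (t - s)) ?mulr0 //; lia.
- by rewrite gbinom_negz ?mulr0.
- by subst s; rewrite subrr subnn gbinom_n0 // muln0 !expr0 !mulr1.
Qed.

Lemma Sfun_big q e r t L m : (r + L < t)%N -> Sfun q e r t L m = 0.
Proof.
move=> h; rewrite /Sfun big_nat big1 // => s /andP[_ hs]; rewrite /term.
rewrite subzn; last by lia.
by rewrite (@gbinom_big q L (t - s)) ?mulr0 //; lia.
Qed.

Lemma Sfun_t0 q e r L m : (1 < q)%N -> Sfun q e r 0 L m = 1.
Proof.
move=> hq; rewrite /Sfun big_nat_recl // big_nat big1 ?addr0.
  rewrite /term /sg /fe; case: e; rewrite ?subn0 ?expr0 ?mul1r divff ?gfact_neq0 //;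
    rewrite ?subr0 ?mul0n ?bin0n ?expr0 ?mulr1 ?gbinom_n0 //.
move=> s /andP[_ hs]; rewrite /term.
by rewrite gbinom_negz ?mulr0.
Qed.

Lemma Sfun_r0 q e t L m :
  Sfun q e 0 t L m = Sfun q false 0 t L m.
Proof. by rewrite /Sfun !big_nat1 /term /sg /fe; case: e; rewrite ?expr0. Qed.

Lemma Tgen q L : (1 < q)%N -> forall r t m, (r + L <= m)%N ->
  Sfun q false r t L m = Sfun q false 0 t (r + L) m.
Proof.
move=> hq; elim: L => [|L IH] r t m hm.
  rewrite Sfun_L0 // addn0 /Sfun big_nat1 /term /sg /fe subr0 !subn0 mul0n.
  by rewrite !expr0 !mul1r gbinom_n0 // !mulr1 (mulrC (q%:R ^+ 'C(t, 2))).
case: t => [|t]; first by rewrite !Sfun_t0.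
case: (leqP t.+1 (r + L.+1)) => ht; last first.
  by rewrite !Sfun_big //; lia.
rewrite addnS !Srec //; try lia.
by rewrite !IH //; lia.
Qed.
Definition om (F : finFieldType) (x : F) : rat :=
  if x == 0 then 1 else - ((#|F|%:R - 1)^-1).

Arguments om {F}.

Lemma Fgt1 (F : finFieldType) : (1 < #|F|)%N.
Proof. exact: card_finNzRing_gt1. Qed.

Lemma sum_om (F : finFieldType) : \sum_(x : F) om x = 0.
Proof.
rewrite (bigD1 0) //= /om eqxx.
rewrite (eq_bigr (fun _ => - ((#|F|%:R - 1)^-1))); last by move=> x /negbTE ->.
rewrite sumr_const cardC1; set a := - _; rewrite -mulr_natl /a.
have h := Fgt1 F.
have -> : ((#|F|.-1)%:R : rat) = #|F|%:R - 1.
  by rewrite -subn1 natrB // ltnW.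
have : (#|F|%:R : rat) - 1 != 0.
  by rewrite subr_eq0 pnatr_eq1; apply/eqP; lia.
move=> nz; field; exact: nz.
Qed.

Lemma sum_om_shift (F : finFieldType) (c : F) : \sum_(x : F) om (x + c) = 0.
Proof.
rewrite (reindex_inj (addIr (- c))) /=.
rewrite (eq_bigr (fun x => om x)) ?sum_om // => x _.
by rewrite addrNK.
Qed.

Lemma sum_om_lin (F : finFieldType) k (h : 'rV[F]_k -> F) (v0 : 'rV[F]_k) (c : F) :
  (forall v x, h (v + x *: v0) = h v + x) -> \sum_v om (h v + c) = 0.
Proof.
move=> hl; set S := \sum_v _.
have e : forall x : F, S = \sum_v om (h v + x + c).
  move=> x; rewrite /S (reindex_inj (addIr (x *: v0))) /=.
  by apply: eq_bigr => v _; rewrite hl.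
have : \sum_(x : F) S = 0.
  rewrite (eq_bigr _ (fun x _ => e x)) exchange_big /=.
  rewrite big1 // => v _.
  rewrite (eq_bigr (fun x => om (x + (h v + c)))) ?sum_om_shift //.
  by move=> x _; rewrite [h v + x]addrC addrA.
rewrite sumr_const -mulr_natl => /eqP; rewrite mulf_eq0 => /orP[|/eqP//].
by rewrite pnatr_eq0; have := Fgt1 F; case: #|F|.
Qed.

Lemma rank_colS (F : fieldType) k m (u : 'rV[F]_m) (N : 'M[F]_(k, m)) :
  \rank (col_mx u N) = (\rank N + ~~ (u <= N)%MS)%N.
Proof.
rewrite -addsmxE; case: (boolP (u <= N)%MS) => h.
  by rewrite (addsmx_idPr h) addn0.
have a : (\rank N < \rank (u + N))%N.
  rewrite (ltn_leqif (mxrank_leqif_sup (addsmxSr u N))).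
  by rewrite addsmx_sub negb_and h.
have b := (mxrank_adds_leqif u N).1.
have c := rank_leq_row u.
lia.
Qed.

Lemma sum_span (F : finFieldType) k m (N : 'M[F]_(k, m)) (g : 'rV[F]_m -> rat) :
  \sum_(u | (u <= N)%MS) g u = \sum_(v : 'rV[F]_(\rank N)) g (v *m row_base N).
Proof.
have [B AB1] := row_freeP (row_base_free N).
have inj : injective (fun v : 'rV[F]_(\rank N) => v *m row_base N).
  by apply: (can_inj (g := mulmx^~ B)) => v; rewrite -mulmxA AB1 mulmx1.
rewrite (eq_bigl (mem ((fun v : 'rV[F]_(\rank N) => v *m row_base N) @: [set: 'rV[F]_(\rank N)]))).
  rewrite big_imset /=; last by move=> x y _ _; apply: inj.
  by apply: eq_bigl => v; rewrite inE.
move=> u /=; apply/idP/imsetP.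
  rewrite -(eq_row_base N) => /submxP [v ->]; by exists v; rewrite ?inE.
by case=> v _ ->; rewrite -(eq_row_base N) submxMl.
Qed.

Lemma card_span (F : finFieldType) k m (N : 'M[F]_(k, m)) :
  \sum_(u : 'rV[F]_m | (u <= N)%MS) (1 : rat) = (#|F|%:R) ^+ \rank N.
Proof.
rewrite sum_span sumr_const card_mx mul1n.
by rewrite -natrX.
Qed.

Lemma card_all (F : finFieldType) m :
  \sum_(u : 'rV[F]_m) (1 : rat) = (#|F|%:R) ^+ m.
Proof. by rewrite sumr_const card_mx mul1n natrX. Qed.

Lemma inner (F : finFieldType) k m t (N : 'M[F]_(k, m)) (g : 'rV[F]_m -> rat) :
  \sum_(u : 'rV_m | \rank (col_mx u N) == t.+1) g u =
  (if \rank N == t.+1 then \sum_(u | (u <= N)%MS) g u else 0) +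
  (if \rank N == t then \sum_u g u - \sum_(u | (u <= N)%MS) g u else 0).
Proof.
have [h1|h1] := eqVneq (\rank N) t.+1.
  rewrite ?h1 ?eqxx.
  have -> : (t.+1 == t) = false by apply/eqP; lia.
  rewrite addr0; apply: eq_bigl => u.
  by rewrite rank_colS h1; case: (u <= N)%MS; rewrite /= ?addn0 ?addn1 ?eqxx //; apply/negbTE/eqP; lia.
have [h2|h2] := eqVneq (\rank N) t.
  rewrite ?h2 ?eqxx ?(negbTE h1) add0r (bigID (fun u => (u <= N)%MS) predT) /= [X in X - _]addrC addrK.
  apply: eq_bigl => u.
  by rewrite rank_colS h2; case: (u <= N)%MS; rewrite /= ?addn0 ?addn1 ?eqxx //; apply/negbTE/eqP; lia.
rewrite ?(negbTE h1) ?(negbTE h2) addr0 big_pred0 // => u.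
rewrite rank_colS; case: (u <= N)%MS => /=; apply/negbTE; apply/eqP;
  move: h1 h2 => /eqP h1 /eqP h2; lia.
Qed.

Definition Dg (F : finFieldType) (r t l m : nat) : rat :=
  \sum_(M : 'M[F]_(l, m) | \rank M == t) om (tau r M).

Lemma tau0 (F : finFieldType) r l m : tau r (0 : 'M[F]_(l, m)) = 0.
Proof.
rewrite /tau big1 // => i _; rewrite big1 // => j _.
by rewrite mxE; case: ifP.
Qed.

Lemma Dg_t0 F r l m : Dg F r 0 l m = 1.
Proof.
rewrite /Dg (eq_bigl (fun M => M == 0)) => [|M]; last by rewrite mxrank_eq0.
by rewrite big_pred1_eq tau0 /om eqxx.
Qed.

Lemma Dg_big F r t l m : (l < t)%N -> Dg F r t l m = 0.
Proof.
move=> h; rewrite /Dg big_pred0 // => M.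
apply/negbTE/eqP => e; have := rank_leq_row M; lia.
Qed.

Lemma sum_colmx (F : finFieldType) l1 l2 m (G : 'M[F]_(l1 + l2, m) -> rat) :
  \sum_M G M = \sum_(U : 'M[F]_(l1, m)) \sum_(d : 'M[F]_(l2, m)) G (col_mx U d).
Proof.
rewrite pair_bigA /=.
rewrite (reindex (fun p : 'M[F]_(l1, m) * 'M[F]_(l2, m) => col_mx p.1 p.2)) //=.
exists (fun M => (usubmx M, dsubmx M)) => [[U d] _ | M _] /=.
  by rewrite col_mxKu col_mxKd.
by rewrite vsubmxK.
Qed.

Lemma sum_rowmx (F : finFieldType) l m1 m2 (G : 'M[F]_(l, m1 + m2) -> rat) :
  \sum_M G M = \sum_(U : 'M[F]_(l, m1)) \sum_(d : 'M[F]_(l, m2)) G (row_mx U d).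
Proof.
rewrite pair_bigA /=.
rewrite (reindex (fun p : 'M[F]_(l, m1) * 'M[F]_(l, m2) => row_mx p.1 p.2)) //=.
exists (fun M => (lsubmx M, rsubmx M)) => [[U d] _ | M _] /=.
  by rewrite row_mxKl row_mxKr.
by rewrite hsubmxK.
Qed.

Lemma sum_if (I : finType) (P : pred I) (f : I -> rat) K :
  \sum_i f i * (if P i then K else 0) = K * \sum_(i | P i) f i.
Proof.
rewrite mulr_sumr [in RHS]big_mkcond; apply: eq_bigr => i _.
by case: (P i); rewrite ?mulr0 // mulrC.
Qed.

Lemma rank_col_swap (F : fieldType) l1 l2 m (A : 'M[F]_(l1, m)) (B : 'M[F]_(l2, m)) :
  \rank (col_mx A B) = \rank (col_mx B A).
Proof. by rewrite -!addsmxE addsmxC. Qed.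

Lemma tau_colmx (F : finFieldType) r l m (U : 'M[F]_(l, m)) (d : 'M[F]_(1, m)) :
  (r <= l)%N -> tau r (col_mx U d) = tau r U.
Proof.
move=> hr; rewrite /tau big_split_ord /= big_ord1 [X in _ + X]big1 ?addr0.
  apply: eq_bigr => i _; apply: eq_bigr => j _.
  by rewrite col_mxEu.
move=> j _; have -> : (rshift l ord0 < r)%N = false.
  by rewrite /= addn0 ltnNge hr.
by rewrite andbF.
Qed.

Lemma RecA F r t l m : (r <= l)%N ->
  Dg F r t.+1 (l + 1) m =
  (#|F|%:R : rat) ^+ t.+1 * Dg F r t.+1 l m +
  ((#|F|%:R : rat) ^+ m - (#|F|%:R : rat) ^+ t) * Dg F r t l m.
Proof.
move=> hr; set Q := (#|F|%:R : rat).
rewrite /Dg big_mkcond sum_colmx.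
rewrite (eq_bigr (fun U => om (tau r U) * ((if \rank U == t.+1 then Q ^+ t.+1 else 0) +
     (if \rank U == t then Q ^+ m - Q ^+ t else 0)))).
  by rewrite (eq_bigr _ (fun U _ => mulrDr _ _ _)) big_split /= !sum_if.
move=> U _.
transitivity (om (tau r U) * \sum_(d : 'rV[F]_m | \rank (col_mx d U) == t.+1) 1).
  rewrite mulr_sumr [in RHS]big_mkcond; apply: eq_bigr => d _.
  rewrite rank_col_swap tau_colmx //.
  by case: ifP; rewrite ?mulr1 ?mulr0.
rewrite inner card_span card_all -/Q; congr (_ * _).
by case: eqP => [->|_] //; case: eqP => [->|_].
Qed.

Lemma tau_block (F : finFieldType) r l m (u : 'rV[F]_(1 + m)) (c : 'cV[F]_l)
   (D : 'M[F]_(l, m)) :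
  tau r.+1 (col_mx u (row_mx c D) : 'M_(1 + l, 1 + m)) = u 0 0 + tau r D.
Proof.
rewrite /tau big_split_ord /= big_ord1.
congr (_ + _).
  rewrite big_split_ord /= big_ord1 [X in _ + X]big1 ?addr0.
    by rewrite /= col_mxEu; congr (u _ _); apply/val_inj.
  by [].
apply: eq_bigr => i _.
rewrite big_split_ord /= big_ord1 add0r.
apply: eq_bigr => j _.
rewrite /= !add1n eqSS ltnS col_mxEd row_mxEr.
by [].
Qed.

Lemma span_om (F : finFieldType) l m (c : 'cV[F]_l) (D : 'M[F]_(l, m)) (k : F) :
  \sum_(u : 'rV[F]_(1 + m) | (u <= row_mx c D)%MS) om (u 0 0 + k) =
  if c == 0 then (#|F|%:R : rat) ^+ \rank D * om k else 0.
Proof.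
have e0 : (0 : 'I_(1 + m)) = lshift m 0 by apply/val_inj.
case: eqP => [-> | /eqP hc].
  rewrite (eq_bigr (fun _ => 1 * om k)).
    by rewrite -mulr_suml card_span rank_row_0mx.
  move=> u /submxP [v ->].
  by rewrite mul_mx_row mulmx0 e0 row_mxEl mxE add0r mul1r.
rewrite sum_span.
have [i hi] : exists i, c i 0 != 0 by apply/cV0Pn.
have : (row i (row_mx c D) <= row_base (row_mx c D))%MS.
  by rewrite eq_row_base row_sub.
case/submxP => y hy.
have y00 : (y *m row_base (row_mx c D)) 0 0 = c i 0.
  by rewrite -hy mxE e0 row_mxEl.
apply: (@sum_om_lin F _ _ ((c i 0)^-1 *: y)) => v x.
have y00x : \sum_j y 0 j * row_base (row_mx c D) j 0 = c i 0 by rewrite -y00 mxE.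
rewrite mulmxDl -!scalemxAl !mxE y00x mulVf // mulr1.
by [].
Qed.

Lemma sum_if2 (I : finType) (P : pred I) (f : I -> rat) K :
  \sum_i (if P i then K * f i else 0) = K * \sum_(i | P i) f i.
Proof. by rewrite mulr_sumr [in RHS]big_mkcond. Qed.

Lemma RecB F r t l m :
  Dg F r.+1 t.+1 (1 + l) (1 + m) =
  (#|F|%:R : rat) ^+ t.+1 * Dg F r t.+1 l m - (#|F|%:R : rat) ^+ t * Dg F r t l m.
Proof.
set Q := (#|F|%:R : rat).
rewrite /Dg big_mkcond sum_colmx exchange_big /= sum_rowmx.
have key : forall (c : 'cV[F]_l) (D : 'M[F]_(l, m)),
  \sum_(U : 'M[F]_(1, 1 + m)) (if \rank (col_mx U (row_mx c D)) == t.+1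
      then om (tau r.+1 (col_mx U (row_mx c D) : 'M_(1 + l, 1 + m))) else 0) =
  if c == 0 then (if \rank D == t.+1 then Q ^+ t.+1 * om (tau r D) else 0) -
                 (if \rank D == t then Q ^+ t * om (tau r D) else 0) else 0.
  move=> c D.
  rewrite -big_mkcond (eq_bigr (fun u : 'rV[F]_(1 + m) => om (u 0 0 + tau r D))) => [|u _]; last first.
    by rewrite tau_block.
  have z : \sum_(u : 'rV[F]_(1 + m)) om (u 0 0 + tau r D) = 0.
    apply: (@sum_om_lin F _ (fun u => u 0 0) (delta_mx 0 0)) => v x.
    by rewrite !mxE eqxx mulr1.
  rewrite inner span_om z.
  have [->|hc] := eqVneq c 0; last first.
    by rewrite ?subr0; case: ifP; case: ifP; rewrite ?addr0.
  rewrite ?eqxx rank_row_0mx -/Q.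
  by case: eqP => [->|_]; case: eqP => [->|_]; rewrite ?add0r ?addr0 ?sub0r ?subr0.
rewrite (eq_bigr _ (fun c _ => eq_bigr _ (fun D _ => key c D))).
rewrite (bigD1 (0 : 'cV[F]_l)) //= [X in _ + X]big1 ?addr0; last first.
  by move=> c hc; rewrite big1 // => D _; rewrite (negbTE hc).
rewrite eqxx sumrB !sum_if2.
by [].
Qed.

Lemma Sfun_sq q r t m : (1 < q)%N ->
  Sfun q true r t 0 m = (-1) ^+ t * (q%:R : rat) ^+ 'C(t, 2) * gbinom q r t.
Proof.
move=> hq; rewrite Sfun_L0 // /sg /fe divff ?gfact_neq0 //.
by rewrite mulr1.
Qed.

Lemma Dg_square F r : forall t m, (r <= m)%N ->
  Dg F r t r m = Sfun #|F| true r t 0 m.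
Proof.
have hq := Fgt1 F.
elim: r => [|r IH] t m hm.
  case: t => [|t]; first by rewrite Dg_t0 Sfun_t0.
  by rewrite Dg_big // Sfun_big.
case: m hm => [//|m] hm.
case: t => [|t]; first by rewrite Dg_t0 Sfun_t0.
have := RecB F r t r m; rewrite !add1n => ->.
rewrite !IH // !Sfun_sq // gbinom_pascal // binS bin1 !exprS exprD.
ring.
Qed.

Lemma Dg_gen F L : forall r t m, (r + L <= m)%N ->
  Dg F r t (r + L) m = Sfun #|F| true r t L m.
Proof.
have hq := Fgt1 F.
elim: L => [|L IH] r t m hm.
  by rewrite addn0 Dg_square //; move: hm; rewrite addn0.
case: t => [|t]; first by rewrite Dg_t0 Sfun_t0.
case: (leqP t.+1 (r + L.+1)) => ht; last first.
  by rewrite Dg_big // Sfun_big.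
have -> : (r + L.+1 = (r + L) + 1)%N by lia.
rewrite RecA; last by apply: leq_addr.
rewrite !IH; try lia.
by rewrite Srec //; lia.
Qed.

Lemma sum1_set (T : finType) (P : pred T) :
  \sum_(x | P x) (1 : rat) = (#|[set x | P x]|)%:R.
Proof.
rewrite -sum1_card natr_sum; apply: eq_big => // x.
by rewrite inE.
Qed.

Lemma tau_r0 (F : finFieldType) l m (M : 'M[F]_(l, m)) : tau 0 M = 0.
Proof. by rewrite /tau big1 // => i _; rewrite big1 // => j _; rewrite andbF. Qed.

Lemma mu_eq F t l m : ((mu F t l m)%:R : rat) = Dg F 0 t l m.
Proof.
rewrite /Dg (eq_bigr (fun _ => 1)) ?sum1_set // => M _.
by rewrite tau_r0 /om eqxx.
Qed.

Theorem mainTheorem17 (F : finFieldType) (r t l m : nat)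
  (ht1 : (1 <= t)%N) (htl : (t <= l)%N) (hlm : (l <= m)%N)
  (hr1 : (1 <= r)%N) (hrl : (r <= l)%N) :
  let q := #|F| in
  let qR : rat := q%:R in
  ((wcount F r t l m)%:R : rat) =
    (qR - 1) / qR *
      \sum_(1 <= s < r.+1)
        qR ^+ 'C(s, 2) *
        (gfact q m / gfact q (m - t) - (-1) ^+ s * (gfact q (m - s) / gfact q (m - t))) *
        qR ^+ (s * (l - r)) * qR ^+ 'C(t - s, 2) *
        gbinom q r s%:Z * gbinom q (l - r) (t%:Z - s%:Z)
  /\
  ((wcount F r t l m)%:R : rat) =
    (qR - 1) / qR *
      ((mu F t l m)%:R -
        \sum_(0 <= s < r.+1)
          (-1) ^+ s * qR ^+ 'C(s, 2) * (gfact q (m - s) / gfact q (m - t)) *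
          qR ^+ (s * (l - r)) * qR ^+ 'C(t - s, 2) *
          gbinom q r s%:Z * gbinom q (l - r) (t%:Z - s%:Z)).
Proof.
move=> q qR.
have hq : (1 < q)%N := Fgt1 F.
have hL : l = (r + (l - r))%N by lia.
have eD : Dg F r t l m = Sfun q true r t (l - r) m.
  by rewrite {1}hL Dg_gen // -hL.
have eM : ((mu F t l m)%:R : rat) = Sfun q false r t (l - r) m.
  rewrite mu_eq; have := Dg_gen F l 0 t m; rewrite add0n => -> //.
  by rewrite Sfun_r0 (Tgen q (l - r) hq r t m) -?hL.
have eS : \sum_(0 <= s < r.+1)
          (-1) ^+ s * qR ^+ 'C(s, 2) * (gfact q (m - s) / gfact q (m - t)) *
          qR ^+ (s * (l - r)) * qR ^+ 'C(t - s, 2) *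
          gbinom q r s%:Z * gbinom q (l - r) (t%:Z - s%:Z) = Sfun q true r t (l - r) m.
  by [].
set A0 := \sum_(M : 'M[F]_(l, m) | (\rank M == t) && (tau r M == 0)) (1 : rat).
set w := ((wcount F r t l m)%:R : rat).
have hw : w = \sum_(M : 'M[F]_(l, m) | (\rank M == t) && (tau r M != 0)) (1 : rat).
  by rewrite sum1_set.
have hmu : ((mu F t l m)%:R : rat) = A0 + w.
  by rewrite hw -sum1_set (bigID (fun M => tau r M == 0)).
have hD : Dg F r t l m = A0 - w / (qR - 1).
  rewrite /Dg (bigID (fun M => tau r M == 0)) /=.
  congr (_ + _).
    by apply: eq_bigr => M /andP[_ /eqP ->]; rewrite /om eqxx.
  rewrite hw mulr_suml -sumrN; apply: eq_bigr => M /andP[_ /negbTE h].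
  by rewrite /om h mul1r.
have q0 : qR != 0 by rewrite pnatr_eq0; lia.
have q1 : qR - 1 != 0 by rewrite subr_eq0 pnatr_eq1; lia.
have second : w = (qR - 1) / qR * ((mu F t l m)%:R - Sfun q true r t (l - r) m).
  rewrite -eD hmu hD; field; rewrite q0 q1 //.
split; last by rewrite eS.
rewrite second eM; congr (_ * _).
rewrite /Sfun !(big_ltn (ltn0Sn r)).
have -> : term q false r t (l - r) m 0 = term q true r t (l - r) m 0.
  by rewrite /term /sg /fe.
rewrite opprD addrACA subrr add0r -sumrB.
apply: eq_bigr => s _; rewrite /term /sg /fe subn0.
have := gfact_neq0 q (m - t) hq => nz.
by field.
Qed.
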